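(* Let $\mathcal{G}$ be a bottleneck routing game and let $f$ be any subpath-optimal Nash flow of $\mathcal{G}$. Then $B(f)=B^*(\mathcal{G})$.
   Context: A bottleneck routing game is $\mathcal{G}=(G(V,E),(c_e)_{e\in E},r)$: $G$ is a directed network with origin $s$ and destination $t$, each edge $e$ has a continuous non-decreasing latency function $c_e:[0,r]\to\mathbb{R}_{\ge0}$, and $r>0$ is the traffic rate. A flow is a nonnegative vector $f$ indexed by the simple $s$–$t$ paths with $\sum_p f_p=r$; $f_e=\sum_{p\ni e}f_p$; $b_p(f)=\max_{e\in p}c_e(f_e)$ for any path $p$; $B(f)=\max_{p:f_p>0}b_p(f)$. $B^*(\mathcal{G})=\min_f B(f)$ over feasible flows. $f$ is a Nash flow if for all $s$–$t$ paths $p,p'$ with $f_p>0$, $b_p(f)\le b_{p'}(f)$. For a flow $f$ and vertex $u$, $b_f(u)$ denotes the minimum over all $s$–$u$ paths $q$ of $\max_{e\in q}c_e(f_e)$. A flow $f$ is a subpath-optimal Nash flow if it is a Nash flow and for every vertex $u$ and every $s$–$t$ path $p$ with $f_p>0$ containing $u$, the bottleneck cost $\max_e c_e(f_e)$ over the edges of the $s$–$u$ part of $p$ equals $b_f(u)$. *)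

(* Defs.v *)
From HB Require Import structures.
From mathcomp Require Import all_boot all_order all_algebra.
From mathcomp Require Import all_classical all_reals all_analysis.
Set Implicit Arguments. Unset Strict Implicit. Unset Printing Implicit Defensive.
Import Order.TTheory GRing.Theory Num.Theory numFieldNormedType.Exports.
Local Open Scope ring_scope.

Section Bottleneck.
Variables (V E : finType) (src tgt : E -> V).

Fixpoint walk (x y : V) (p : seq E) : bool :=
  match p with
  | [::] => x == y
  | e :: p' => (src e == x) && walk (tgt e) y p'
  end.

Definition verts (x : V) (p : seq E) : seq V := x :: map tgt p.

Definition simple_path (x y : V) (p : seq E) : bool :=
  walk x y p && uniq (verts x p).

(* all edge sequences of length at most #|E| (simple paths have distinct
   edges, hence are among them) *)
Definition short_seqs : seq (seq E) :=
  flatten [seq [seq tval t | t : k.-tuple E] | k <- iota 0 #|E|.+1].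

Definition spaths (x y : V) : seq (seq E) :=
  undup [seq p <- short_seqs | simple_path x y p].

Variable R : realType.

(* A path flow is a function from edge sequences to R; only simple s–t paths
   may carry flow. *)
Definition is_flow (s t : V) (r : R) (f : seq E -> R) : Prop :=
  [/\ forall p, 0 <= f p,
      forall p, p \notin spaths s t -> f p = 0
    & \sum_(p <- spaths s t) f p = r].

Definition eload (s t : V) (f : seq E -> R) (e : E) : R :=
  \sum_(p <- spaths s t | e \in p) f p.

(* bottleneck cost of an edge sequence q: max_{e in q} c_e(f_e)
   (0 for the empty sequence; all costs are >= 0) *)
Definition bneck (c : E -> R -> R) (s t : V) (f : seq E -> R) (q : seq E) : R :=
  \big[Num.max/0]_(e <- q) c e (eload s t f e).

Definition Bcost (c : E -> R -> R) (s t : V) (f : seq E -> R) : R :=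
  \big[Num.max/0]_(p <- spaths s t | 0 < f p) bneck c s t f p.

Definition is_Nash (c : E -> R -> R) (s t : V) (r : R) (f : seq E -> R) : Prop :=
  is_flow s t r f /\
  forall p p', p \in spaths s t -> p' \in spaths s t -> 0 < f p ->
    bneck c s t f p <= bneck c s t f p'.

Definition minseq (l : seq R) : R := foldr Num.min (head 0 l) l.

Definition bf (c : E -> R -> R) (s t : V) (f : seq E -> R) (u : V) : R :=
  minseq [seq bneck c s t f q | q <- spaths s u].

Definition prefix (s : V) (p : seq E) (u : V) : seq E :=
  take (index u (verts s p)) p.

Definition is_subpath_optimal_Nash (c : E -> R -> R) (s t : V) (r : R)
    (f : seq E -> R) : Prop :=
  is_Nash c s t r f /\
  forall u p, p \in spaths s t -> 0 < f p -> u \in verts s p ->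
    bneck c s t f (prefix s p u) = bf c s t f u.

Definition routing_game (c : E -> R -> R) (r : R) : Prop :=
  0 < r /\ forall e,
   [/\ ({within [set x : R | (0 <= x <= r)%R], continuous (c e)})%classic,
       forall x y, 0 <= x -> x <= y -> y <= r -> c e x <= c e y
     & forall x, 0 <= x -> x <= r -> 0 <= c e x].

End Bottleneck.

(* Main.v *)
Require Import Defs.
From HB Require Import structures.
From mathcomp Require Import all_boot all_order all_algebra.
From mathcomp Require Import all_classical all_reals all_analysis.
Import Order.TTheory GRing.Theory Num.Theory numFieldNormedType.Exports.
Local Open Scope ring_scope.
Set Implicit Arguments. Unset Strict Implicit. Unset Printing Implicit Defensive.

Lemma walk_cat (V E : finType) (src tgt : E -> V) x y (a b : seq E) :
  walk src tgt x y (a ++ b) =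
  walk src tgt x (last x (map tgt a)) a && walk src tgt (last x (map tgt a)) y b.
Proof.
elim: a x => [|e a IH] x /=; first by rewrite eqxx.
by rewrite IH andbA.
Qed.

Lemma mem_spaths (V E : finType) (src tgt : E -> V) x y (p : seq E) :
  (p \in spaths src tgt x y) = simple_path src tgt x y p.
Proof.
rewrite /spaths mem_undup mem_filter.
case Hs: (simple_path src tgt x y p) => //=.
move: Hs => /andP[_ Hu].
have up : uniq p by move: Hu; rewrite /verts /= => /andP[_]; apply: map_uniq.
have hs : (size p <= #|E|)%N by rewrite -(card_uniqP up) max_card.
apply/flattenP; exists [seq tval t | t : (size p).-tuple E].
  by apply/mapP; exists (size p) => //; rewrite mem_iota.
by apply/mapP; exists (in_tuple p) => //; rewrite mem_enum.
Qed.

Lemma walk_prefix (V E : finType) (src tgt : E -> V) x y (p : seq E) u :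
  walk src tgt x y p -> u \in verts tgt x p -> walk src tgt x u (Defs.prefix tgt x p u).
Proof.
elim: p x => [|e p IH] x /=.
  by rewrite /Defs.prefix /= => _; rewrite inE => /eqP ->; rewrite eqxx.
move=> /andP[/eqP He Hw]; rewrite /Defs.prefix /verts /=.
case: eqP => [->|Hne]; first by rewrite /= eqxx.
rewrite inE => /orP[/eqP Hu|Hu]; first by case: Hne.
by rewrite /= He eqxx /=; apply: IH.
Qed.

Lemma simple_prefix (V E : finType) (src tgt : E -> V) x y (p : seq E) u :
  simple_path src tgt x y p -> u \in verts tgt x p ->
  simple_path src tgt x u (Defs.prefix tgt x p u).
Proof.
move=> /andP[Hw Hu] Hin; rewrite /simple_path (walk_prefix Hw Hin) /=.
rewrite /Defs.prefix /verts map_take.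
move: (index _ _) => n.
exact: (take_uniq n.+1 Hu).
Qed.
Lemma bneck_ge0 (V E : finType) (src tgt : E -> V) (R : realType) (c : E -> R -> R) s t f q :
  0 <= bneck src tgt c s t f q.
Proof.
rewrite /bneck; elim: q => [|e q IH]; first by rewrite big_nil.
by rewrite big_cons le_max IH orbT.
Qed.

Lemma bneck_cat (V E : finType) (src tgt : E -> V) (R : realType) (c : E -> R -> R) s t f a b :
  bneck src tgt c s t f (a ++ b) =
  Num.max (bneck src tgt c s t f a) (bneck src tgt c s t f b).
Proof.
elim: a => [|e a IH] /=.
  by rewrite {2}/bneck big_nil; apply/esym/max_idPr; apply: bneck_ge0.
move: IH; rewrite /bneck !big_cons => ->; exact: maxA.
Qed.

Lemma bneck_catl (V E : finType) (src tgt : E -> V) (R : realType) (c : E -> R -> R) s t f a b :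
  bneck src tgt c s t f a <= bneck src tgt c s t f (a ++ b).
Proof. by rewrite bneck_cat le_max lexx. Qed.

Lemma bneck_catr (V E : finType) (src tgt : E -> V) (R : realType) (c : E -> R -> R) s t f a b :
  bneck src tgt c s t f b <= bneck src tgt c s t f (a ++ b).
Proof. by rewrite bneck_cat le_max lexx orbT. Qed.

Lemma bneck_mem (V E : finType) (src tgt : E -> V) (R : realType) (c : E -> R -> R) s t f q e :
  e \in q -> c e (eload src tgt s t f e) <= bneck src tgt c s t f q.
Proof. by move=> He; rewrite /bneck; apply: (le_bigmax_seq _ _ xpredT). Qed.

Lemma minseq_le (R : realType) (l : seq R) x : x \in l -> minseq l <= x.
Proof.
rewrite /minseq; move: (head 0 l) => a.
elim: l => [|y l IH] //=; rewrite inE => /orP[/eqP->|H].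
  by rewrite ge_min lexx.
by rewrite ge_min IH ?orbT.
Qed.

Lemma Bcost_ge0 (V E : finType) (src tgt : E -> V) (R : realType) (c : E -> R -> R) s t f :
  0 <= Bcost src tgt c s t f.
Proof.
rewrite /Bcost; elim: (spaths src tgt s t) => [|p l IH]; first by rewrite big_nil.
by rewrite big_cons; case: ifP => // _; rewrite le_max IH orbT.
Qed.
Lemma walk_last (V E : finType) (src tgt : E -> V) x y (p : seq E) :
  walk src tgt x y p -> last x (map tgt p) = y.
Proof.
elim: p x => [|e p IH] x /=; first by move/eqP.
by move=> /andP[_ H]; apply: IH.
Qed.

Unset Implicit Arguments.
Theorem proposition3 (V E : finType) (src tgt : E -> V) (s t : V)
    (R : realType) (c : E -> R -> R) (r : R) (f : seq E -> R) :
  routing_game c r ->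
  is_subpath_optimal_Nash src tgt c s t r f ->
  is_flow src tgt s t r f /\
  forall g : seq E -> R, is_flow src tgt s t r g ->
    Bcost src tgt c s t f <= Bcost src tgt c s t g.
Proof.
move=> [Hr Hgame] [[Hflow HNash] Hopt]; split => //.
move: (Hflow) => [Hf0 Hfout Hfsum].
move=> g [Hg0 Hgout Hgsum].
set sp := spaths src tgt s t.
set B := Bcost src tgt c s t f.
have [HB|HB] := leP B 0; first by apply: le_trans HB (Bcost_ge0 _ _ _ _ _ _).
set bn := bneck src tgt c s t f.
pose S := fun u => has (fun q => bn q < B) (spaths src tgt s u).
pose cut := fun e => S (src e) && ~~ S (tgt e).
have HBle : forall q, q \in sp -> B <= bn q.
  move=> q Hq; rewrite /B /Bcost; apply: bigmax_le; first exact: bneck_ge0.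
  move=> p Hfp; have Hp : p \in sp.
    by apply/negP => Hn; move: Hfp; rewrite Hfout ?ltxx //; apply/negP.
  exact: HNash.
have HtS : ~~ S t.
  by apply/hasPn => q Hq; rewrite -leNgt; apply: HBle.
have HsS : S s.
  apply/hasP; exists [::]; first by rewrite mem_spaths /simple_path /= eqxx.
  by rewrite /bn /bneck big_nil.
have Hcutex : forall x y p, walk src tgt x y p -> S x -> ~~ S y ->
    exists2 e, e \in p & cut e.
  move=> x y p; elim: p x => [|e p IH] x /=.
    by move=> /eqP -> ->.
  move=> /andP[/eqP He Hw] Hx Hy.
  case HSt: (S (tgt e)).
    by have [e' He' Hc] := IH _ Hw HSt Hy; exists e' => //; rewrite inE He' orbT.
  by exists e; rewrite ?inE ?eqxx // /cut He Hx HSt.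
have Hkey : forall p a b, p \in sp -> 0 < f p -> p = a ++ b ->
    S (last s (map tgt a)) = (bn a < B).
  move=> p a b Hp Hfp Hpe.
  have := Hp; rewrite mem_spaths => /andP[Hw Hu].
  set u := last s (map tgt a).
  have Hv : verts tgt s (a ++ b) = verts tgt s a ++ map tgt b by rewrite /verts map_cat.
  have Hua : u \in verts tgt s a by rewrite /verts mem_last.
  have Huniqa : uniq (verts tgt s a).
    by move: Hu; rewrite Hpe Hv cat_uniq => /andP[].
  have Hpre : Defs.prefix tgt s p u = a.
    rewrite /Defs.prefix Hpe Hv index_cat Hua.
    have -> : index u (verts tgt s a) = size a.
      rewrite /u (last_nth s) /verts index_uniq ?size_map //.
      by rewrite /= size_map.
    by rewrite take_size_cat.
  have Hin : u \in verts tgt s p by rewrite Hpe Hv mem_cat Hua.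
  have Hbf := Hopt u p Hp Hfp Hin; rewrite Hpre in Hbf.
  have Ha : a \in spaths src tgt s u.
    rewrite mem_spaths /simple_path Huniqa andbT.
    by move: Hw; rewrite Hpe walk_cat => /andP[].
  apply/idP/idP.
    case/hasP => q Hq Hlt; rewrite /bn Hbf; apply: le_lt_trans Hlt.
    by apply: minseq_le; apply: map_f.
  by move=> H; apply/hasP; exists a.
have Htwo : forall p a e b e' d, p \in sp -> 0 < f p ->
    p = a ++ e :: b ++ e' :: d -> cut e -> cut e' -> False.
  move=> p a e b e' d Hp Hfp Hpe /andP[_ HnS] /andP[HS' _].
  have H1 := Hkey p (a ++ [:: e]) (b ++ e' :: d) Hp Hfp.
  rewrite map_cat last_cat /= -catA /= in H1.
  move: (H1 Hpe); rewrite (negbTE HnS) => /esym/negbT; rewrite -leNgt => H1'.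
  have Hpe2 : p = (a ++ e :: b) ++ e' :: d by rewrite -catA.
  have := Hp; rewrite mem_spaths => /andP[Hw _].
  move: Hw; rewrite Hpe2 walk_cat => /andP[_ /= /andP[/eqP Hsrc _]].
  have H2 := Hkey p _ _ Hp Hfp Hpe2; rewrite -Hsrc HS' in H2.
  have : bn (a ++ [:: e]) <= bn (a ++ e :: b).
    by rewrite -(cat1s e b) catA; apply: bneck_catl.
  move=> H3; have := lt_le_trans (esym H2 : bn _ < B) (le_trans H1' H3).
  by rewrite ltxx.
have Hcutuniq : forall p, p \in sp -> 0 < f p -> forall e1 e2, e1 \in p -> e2 \in p ->
    cut e1 -> cut e2 -> e1 = e2.
  move=> p Hp Hfp e1 e2 He1 He2 Hc1 Hc2.
  case: (eqVneq e1 e2) => // Hne; exfalso.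
  have [p1 [p2 Hpe]] : exists p1 p2, p = p1 ++ e1 :: p2.
    by case/splitPr: He1 => p1 p2; exists p1, p2.
  move: He2; rewrite Hpe mem_cat inE eq_sym (negbTE Hne) /= => /orP[He2|He2].
    have [p3 [p4 Hp1]] : exists p3 p4, p1 = p3 ++ e2 :: p4.
      by case/splitPr: He2 => p3 p4; exists p3, p4.
    apply: (Htwo p p3 e2 p4 e1 p2 Hp Hfp _ Hc2 Hc1).
    by rewrite Hpe Hp1 -catA.
  have [p3 [p4 Hp2]] : exists p3 p4, p2 = p3 ++ e2 :: p4.
    by case/splitPr: He2 => p3 p4; exists p3, p4.
  apply: (Htwo p p1 e1 p3 e2 p4 Hp Hfp _ Hc1 Hc2).
  by rewrite Hpe Hp2.
have Hswap : forall h : seq E -> R,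
    \sum_(e | cut e) eload src tgt s t h e =
    \sum_(p <- sp) \sum_(e | cut e) (if e \in p then h p else 0).
  move=> h; rewrite /eload.
  under eq_bigr do rewrite big_mkcond.
  exact: exchange_big.
have Hge0 : forall (h : seq E -> R), (forall p, 0 <= h p) -> forall e,
    0 <= eload src tgt s t h e.
  by move=> h Hh e; apply: sumr_ge0.
have Hlow : r <= \sum_(e | cut e) eload src tgt s t g e.
  rewrite Hswap -Hgsum (big_seq _ _ sp) [X in _ <= X](big_seq _ _ sp); apply: ler_sum => p Hp.
  have := Hp; rewrite mem_spaths => /andP[Hw _].
  have [e0 He0 Hc0] := Hcutex _ _ _ Hw HsS HtS.
  rewrite (bigD1 e0) //= He0 lerDl; apply: sumr_ge0 => e _.
  by case: ifP.
have Hup : \sum_(e | cut e) eload src tgt s t f e <= r.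
  rewrite Hswap -Hfsum (big_seq _ _ sp) [X in _ <= X](big_seq _ _ sp); apply: ler_sum => p Hp.
  have := Hf0 p; rewrite le_eqVlt => /orP[/eqP Hz|Hfp].
    by rewrite -Hz big1 // => e _; rewrite if_same.
  case: (pickP (fun e => cut e && (e \in p))) => [e0 /andP[Hc He]|Hnone].
    rewrite (bigD1 e0) //= He big1 ?addr0 // => e /andP[Hce Hne].
    case: ifP => // Hep.
    by have := Hcutuniq p Hp Hfp e e0 Hep He Hce Hc; move/eqP: Hne.
  rewrite big1 ?(ltW Hfp) // => e Hce.
  by have := Hnone e; rewrite /= Hce /= => ->.
have : [exists e, [&& cut e, 0 < eload src tgt s t g e &
                   eload src tgt s t f e <= eload src tgt s t g e]].
  apply: contraT => /existsPn Hno.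
  have Hpt : forall e, cut e -> eload src tgt s t g e <= eload src tgt s t f e.
    move=> e Hc; have := Hno e; rewrite Hc /=.
    case: (ltrP 0 (eload src tgt s t g e)) => Hg /=.
      by rewrite -ltNge => /ltW.
    by move=> _; apply: le_trans Hg (Hge0 _ Hf0 e).
  have : [exists e, cut e && (0 < eload src tgt s t g e)].
    apply: contraT => /existsPn Hn.
    have : \sum_(e | cut e) eload src tgt s t g e <= 0.
      apply: sumr_le0 => e Hc; have := Hn e; rewrite Hc /= -leNgt; exact.
    move=> H; have := le_trans Hlow H; rewrite leNgt Hr //.
  case/existsP => e0 /andP[Hc0 Hgp0].
  have Hlt : \sum_(e | cut e) eload src tgt s t g e < \sum_(e | cut e) eload src tgt s t f e.
    rewrite (bigD1 e0 Hc0) [X in _ < X](bigD1 e0 Hc0) /=.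
    apply: ltr_leD.
      by have := Hno e0; rewrite Hc0 Hgp0 /= -ltNge.
    by apply: ler_sum => e /andP[Hc _]; apply: Hpt.
  by have := lt_le_trans Hlt (le_trans Hup Hlow); rewrite ltxx.
case/existsP => e0 /and3P[Hc0 Hgpos Hle].
have HcB : B <= c e0 (eload src tgt s t f e0).
  move: Hc0 => /andP[/hasP[q Hq Hqlt] HnS].
  have Hqs := Hq; rewrite mem_spaths in Hqs.
  case Hv: (tgt e0 \in verts tgt s q).
    exfalso; move/negP: HnS; apply; apply/hasP.
    exists (Defs.prefix tgt s q (tgt e0)).
      by rewrite mem_spaths; apply: simple_prefix Hqs Hv.
    apply: le_lt_trans Hqlt; rewrite /bn /Defs.prefix.
    move: (index _ _) => k.
    by rewrite -{2}(cat_take_drop k q); apply: bneck_catl.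
  have Hq2 : q ++ [:: e0] \in spaths src tgt s (tgt e0).
    move: Hqs => /andP[Hw Hu].
    rewrite mem_spaths /simple_path walk_cat (walk_last Hw) Hw.
    have -> : walk src tgt (src e0) (tgt e0) [:: e0] by rewrite /= !eqxx.
    have -> : verts tgt s (q ++ [:: e0]) = rcons (verts tgt s q) (tgt e0).
      by rewrite /verts map_cat cats1.
    by rewrite rcons_uniq Hu Hv.
  move/hasPn: HnS => /(_ _ Hq2); rewrite -leNgt /bn bneck_cat.
  rewrite {2}/bneck big_cons big_nil !le_max => /orP[H|/orP[H|H]] //.
    by move: Hqlt; rewrite ltNge H.
  by move: HB; rewrite ltNge H.
have Hfg : c e0 (eload src tgt s t f e0) <= c e0 (eload src tgt s t g e0).
  have [_ Hmono _] := Hgame e0; apply: Hmono => //; first exact: Hge0.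
  rewrite /eload -Hgsum [X in _ <= X](bigID (fun p => e0 \in p)) /= lerDl.
  by apply: sumr_ge0.
have : has (fun p => (e0 \in p) && (0 < g p)) sp.
  apply: contraT => /hasPn Hn.
  have : eload src tgt s t g e0 <= 0.
    rewrite /eload big_seq_cond; apply: sumr_le0 => p /andP[Hp Hep].
    by have := Hn p Hp; rewrite Hep /= -leNgt.
  by rewrite leNgt Hgpos.
case/hasP => p Hp /andP[Hep Hgp].
apply: le_trans HcB _; apply: le_trans Hfg _.
apply: le_trans (bneck_mem src tgt c s t g Hep) _.
by rewrite /Bcost; apply: (le_bigmax_seq _ _ (fun p => 0 < g p)).
Qed.
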